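(* Let $G$ be a finite group, $P$ a $p$-subgroup and $Q$ a $q$-subgroup of $G$ for two different primes $p$ and $q$, and assume $\Pr(P,Q)\ge\epsilon>0$. (1) If $P$ normalizes $Q$ and $p>(2/\epsilon)^{6/\epsilon}$, then $[P,Q]=1$. (2) If $p>(2/\epsilon)^{6/\epsilon}$, then $Q$ has a normal subgroup $Q_0$ such that $|Q:Q_0|\le\lfloor 2/\epsilon\rfloor!$ and $[P,Q_0]=1$.
   Context: For subsets $X,Y$ of a finite group, $\Pr(X,Y)=|\{(x,y)\in X\times Y: xy=yx\}|/(|X||Y|)$. *)

(* Defs.v *)
From HB Require Import structures.
From mathcomp Require Import all_boot all_order all_algebra all_fingroup all_solvable.
From mathcomp Require Import reals exp.
Set Implicit Arguments. Unset Strict Implicit. Unset Printing Implicit Defensive.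
Import Order.TTheory GRing.Theory Num.Theory.
Local Open Scope ring_scope.

Definition comm_prob (R : realType) (gT : finGroupType) (X Y : {set gT}) : R :=
  (#|[set xy in setX X Y | (xy.1 * xy.2 == xy.2 * xy.1)%g]|%:R) / ((#|X| * #|Y|)%N%:R).

(* Main.v *)
Require Import Defs.
From HB Require Import structures.
From mathcomp Require Import all_boot all_order all_algebra all_fingroup all_solvable.
From mathcomp Require Import reals exp.
From mathcomp Require Import ring lra.
Import Order.TTheory GRing.Theory Num.Theory.
Local Open Scope ring_scope.


Section Helpers.
Set Implicit Arguments. Unset Strict Implicit.
Lemma card_comm (gT : finGroupType) (P Q : {group gT}) :
  #|[set xy in setX P Q | (xy.1 * xy.2 == xy.2 * xy.1)%g]| = \sum_(y in Q) #|'C_P[y]%g|.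
Proof.
transitivity (\sum_(y in Q) \sum_(x in P) ((x * y)%g == (y * x)%g : nat)).
  rewrite exchange_big pair_big /= -sum1_card big_mkcond /= [RHS]big_mkcond /=.
  apply: eq_bigr => [[x y]] _ /=.
  by rewrite !inE; case: (x \in P); case: (y \in Q).
apply: eq_bigr => y _.
rewrite -sum1_card [RHS]big_mkcond /= [LHS]big_mkcond /=.
apply: eq_bigr => x _; rewrite in_setI cent1E.
by case: (x \in P); case: eqP.
Qed.

Lemma pnat_ge (p m : nat) : prime p -> p.-nat m -> (1 < m)%N -> (p <= m)%N.
Proof.
move=> pr /p_natP[k ->]; case: k => [|k] //= _.
by rewrite expnS leq_pmulr // expn_gt0 prime_gt0.
Qed.

Lemma per_y (gT : finGroupType) (P : {group gT}) p y :
  prime p -> (p.-group P)%g ->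
  (p * #|'C_P[y]%g| <= p * #|P| * (y \in 'C(P)%g) + #|P|)%N.
Proof.
move=> pr pP.
case: (boolP (y \in 'C(P)%g)) => yC.
  rewrite muln1; have -> : 'C_P[y]%g = P.
    by apply/setIidPl; rewrite sub_cent1.
  exact: leq_addr.
rewrite muln0 add0n.
have sCP : 'C_P[y]%g \subset P by exact: subsetIl.
rewrite -(Lagrange sCP) mulnC leq_mul2l; apply/orP; right.
apply: pnat_ge => //.
  exact: pnat_dvd (dvdn_indexg _ _) pP.
rewrite ltn_neqAle indexg_gt0 andbT eq_sym indexg_eq1.
apply/negP => /subsetP sPC; move/negP: yC; apply; rewrite -sub_cent1.
by apply/subsetP => x /sPC /setIP[].
Qed.

Lemma count_bound (gT : finGroupType) (P Q : {group gT}) p :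
  prime p -> (p.-group P)%g ->
  (p * #|[set xy in setX P Q | (xy.1 * xy.2 == xy.2 * xy.1)%g]|
    <= p * #|P| * #|'C_Q(P)%g| + #|P| * #|Q|)%N.
Proof.
move=> pr pP; rewrite card_comm big_distrr /=.
apply: leq_trans; first by apply: leq_sum => y _; apply: (per_y y pr pP).

rewrite big_split /= -big_distrr /= sum_nat_const [(#|Q| * _)%N]mulnC leq_add2r.
rewrite leq_mul2l; apply/orP; right.
rewrite -sum1_card big_mkcond [in X in (_ <= X)%N]big_mkcond /=.
apply: leq_sum => y _; rewrite in_setI.
by case: (y \in Q); case: (y \in 'C(P)%g).
Qed.


Lemma idx_bound (R : realType) (gT : finGroupType) (P Q : {group gT}) (p : nat) (eps : R) :
  prime p -> (p.-group P)%g -> 0 < eps -> eps <= comm_prob R P Q ->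
  powR (2 / eps) (6 / eps) < p%:R ->
  2 / eps < p%:R /\ (#|Q : 'C_Q(P)|%g)%:R < 2 / eps.
Proof.
move=> pr pP e0 ecp pw.
set E := [set xy in setX P Q | (xy.1 * xy.2 == xy.2 * xy.1)%g].
have cb := count_bound Q pr pP; rewrite -/E in cb.
have sC : ('C_Q(P) \subset Q)%g by exact: subsetIl.
have La := Lagrange sC.
have eab : (#|E| <= #|P| * #|Q|)%N.
  rewrite -cardsX; apply: subset_leq_card; apply/subsetP => u; rewrite inE.
  by case/andP.
have a0 : (0 < #|P|)%N := cardG_gt0 P.
have c0 : (0 < #|'C_Q(P)%G|)%N := cardG_gt0 _.
have n0 : (0 < #|Q : 'C_Q(P)|%g)%N := indexg_gt0 _ _.
have p0 : (0 < p)%N := prime_gt0 pr.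
move: ecp; rewrite /comm_prob -/E -La.
set a := #|P|; set c := #|'C_Q(P)%G|; set n := #|Q : 'C_Q(P)|%g; set e := #|E|.
rewrite -La in cb eab; rewrite -/a -/c -/n -/e in cb eab.
have ar : 0 < a%:R :> R by rewrite ltr0n.
have cr : 0 < c%:R :> R by rewrite ltr0n.
have nr : 0 < n%:R :> R by rewrite ltr0n.
have pr0 : 0 < p%:R :> R by rewrite ltr0n.
have cbr : p%:R * e%:R <= p%:R * a%:R * c%:R + a%:R * (c%:R * n%:R) :> R.
  by rewrite -!natrM -natrD ler_nat.
have ebr : e%:R <= a%:R * (c%:R * n%:R) :> R by rewrite -!natrM ler_nat.
rewrite natrM natrM => ecp.
have acn : 0 < a%:R * (c%:R * n%:R) :> R by rewrite !mulr_gt0.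
have ecp' : eps * (a%:R * (c%:R * n%:R)) <= e%:R by rewrite -ler_pdivlMr.
have e1 : eps <= 1.
  by rewrite -(ler_pM2r acn) mul1r; apply: le_trans ebr.
have p2 : 2 / eps < p%:R.
  apply: le_lt_trans pw; apply: le1r_powR.
    by rewrite ler_pdivlMr // mul1r; lra.
  by rewrite ler_pdivlMr // mul1r; lra.
split => //.
have ep : 2 < p%:R * eps by rewrite -ltr_pdivrMr.
have h : p%:R * (eps * (a%:R * (c%:R * n%:R))) <= p%:R * a%:R * c%:R + a%:R * (c%:R * n%:R).
  by apply: le_trans cbr; rewrite ler_pM2l.
have h2 : (a%:R * c%:R) * (p%:R * eps * n%:R) <= (a%:R * c%:R) * (p%:R + n%:R).
  suff -> : (a%:R * c%:R) * (p%:R * eps * n%:R) = p%:R * (eps * (a%:R * (c%:R * n%:R))) :> R.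
    apply: (le_trans h); rewrite le_eqVlt; apply/orP; left; apply/eqP; ring.
  ring.
rewrite ler_pM2l ?mulr_gt0 // in h2.
have h3 : 2 * n%:R < p%:R * eps * n%:R by rewrite ltr_pM2r.
rewrite ltr_pdivlMr //.
nra.
Qed.

Local Open Scope group_scope.

Lemma leq_fact m n : (m <= n)%N -> (m`! <= n`!)%N.
Proof.
elim: n => [|n IH]; first by rewrite leqn0 => /eqP ->.
rewrite leq_eqVlt => /orP[/eqP -> //| ltm].
apply: leq_trans (IH ltm) _; rewrite factS leq_pmull //.
Qed.

Lemma part1 (gT : finGroupType) (P Q : {group gT}) p q :
  prime p -> prime q -> p != q -> p.-group P -> q.-group Q ->
  P \subset 'N(Q) -> (#|Q : 'C_Q(P)| < p)%N -> [~: P, Q] = 1.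
Proof.
move=> pr qr pq pP qQ nPQ ltp.
set C := 'C_Q(P).
apply/commG1P/centsP => x xP y yQ.
have cPC : P \subset 'C(C) by rewrite centsC subsetIr.
have nC : forall z, z \in P -> z \in 'N(C) by move=> z zP; apply: (subsetP (cents_norm cPC)).
have nQ : forall z, z \in P -> z \in 'N(Q) by move=> z zP; apply: (subsetP nPQ).
have actE : forall z, z \in P -> (C :* y) :^ z = C :* (y ^ z).
  by move=> z zP; rewrite conjsMg conjg_set1 (normP (nC z zP)).
have sub : orbit 'Js P (C :* y) \subset rcosets C Q.
  apply/subsetP => X /imsetP[z zP ->] /=; rewrite actE // mem_rcosets.
  by rewrite -(mul1g (y ^ z)) mem_mulg ?group1 // memJ_norm ?nQ.
have c1 : #|orbit 'Js P (C :* y)| = 1%N.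
  have pn : p.-nat #|orbit 'Js P (C :* y)|.
    by rewrite card_orbit; exact: pnat_dvd (dvdn_indexg _ _) pP.
  have cpos : (0 < #|orbit 'Js P (C :* y)|)%N.
    by apply/card_gt0P; exists (C :* y); apply: orbit_refl.
  have cle : (#|orbit 'Js P (C :* y)| <= #|Q : C|)%N by apply: subset_leq_card.
  apply/eqP; rewrite eqn_leq cpos andbT leqNgt; apply/negP => lt1.
  have := pnat_ge pr pn lt1; rewrite leqNgt; move/negP; apply.
  exact: leq_ltn_trans cle ltp.
have orb := card_orbit1 c1.
have := mem_orbit 'Js (C :* y) xP; rewrite orb => /set1P /=; rewrite actE // => eqc.
have : y ^ x \in C :* y by rewrite -eqc rcoset_refl.
rewrite mem_rcoset => zC.
set z := y ^ x * y^-1 in zC.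
have yxz : y ^ x = z * y by rewrite /z mulgKV.
have zQ : z \in Q by move: zC => /setIP[].
have zcP : z \in 'C(P) by move: zC => /setIP[].
have zx : z ^ x = z.
  by apply/conjg_fixP/commgP; apply: (centP zcP).
have iter : forall k, y ^ (x ^+ k) = z ^+ k * y.
  elim=> [|k IH]; first by rewrite expg0 conjg1 expg0 mul1g.
  by rewrite expgSr conjgM IH conjMg conjXg zx yxz expgSr mulgA.
have zo : z ^+ #[x] = 1.
  by apply: (mulIg y); rewrite -iter expg_order conjg1 mul1g.
have dz : (#[z] %| #[x])%N by rewrite order_dvdn zo.
have pz : p.-nat #[z] by apply: pnat_dvd dz (mem_p_elt pP xP).
have qz : q.-nat #[z] by apply: mem_p_elt qQ zQ.
have p'z : p^'.-nat #[z].
  apply: sub_in_pnat qz => r _; rewrite !inE => /eqP ->; rewrite eq_sym.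
  exact: pq.
have : #[z] = 1%N by apply: pnat_1 pz p'z.
move/eqP; rewrite order_eq1 => /eqP z1.
move: yxz; rewrite z1 mul1g => /conjg_fixP/commgP yx.
by rewrite /commute yx.
Qed.

Lemma part2 (gT : finGroupType) (P Q : {group gT}) (m : nat) :
  (#|Q : 'C_Q(P)| <= m)%N ->
  exists Q0 : {group gT}, [/\ Q0 <| Q, (#|Q : Q0| <= m`!)%N & [~: P, Q0] = 1].
Proof.
move=> le_m.
set C := 'C_Q(P).
set S := rcosets C Q.
have nRA : [acts Q, on S | 'Rs] := actsRs_rcosets C Q.
set f := actperm <[nRA]>.
have nK : 'ker f <| Q := ker_normal _.
exists ('ker f)%G; split => //.
  rewrite -{1}(setIid Q) -card_morphim.
  apply: (@leq_trans #|perm_on S|); last first.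
    by rewrite card_perm; apply: leq_fact.
  apply: subset_leq_card; apply/subsetP => s /morphimP[a _ aQ ->].
  rewrite unfold_in; apply/subsetP => X; rewrite inE actpermE /=.
  rewrite /actby /=; case: (X \in S) => //=.
  by rewrite eqxx.
apply/commG1P; rewrite centsC; apply/subsetP => a aK.
have aQ : a \in Q := subsetP (normal_sub nK) a aK.
have CS : (C : {set gT}) \in S.
  by rewrite -{1}(rcoset1 C) mem_rcosets -(mul1g 1) mem_mulg ?group1.
have := mker aK; move/(congr1 (fun s : {perm {set gT}} => s C)).
rewrite perm1 actpermE actbyE //= => eqC.
have : a \in C :* a by apply: rcoset_refl.
by rewrite rcosetE in eqC; rewrite eqC => /setIP[].
Qed.

End Helpers.

Theorem lemma2p10 (R : realType) (gT : finGroupType) (P Q : {group gT})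
  (p q : nat) (eps : R) :
  prime p -> prime q -> p != q ->
  (p.-group P)%g -> (q.-group Q)%g ->
  0 < eps -> eps <= comm_prob R P Q ->
  ((P \subset 'N(Q))%g -> powR (2 / eps) (6 / eps) < p%:R ->
     [~: P, Q]%g = 1%g)
  /\
  (powR (2 / eps) (6 / eps) < p%:R ->
     exists Q0 : {group gT},
       [/\ (Q0 <| Q)%g, (#|Q : Q0|%g <= (Num.truncn (2 / eps))`!)%N
         & [~: P, Q0]%g = 1%g]).

Proof.
move=> pr qr pq pP qQ e0 ecp.
split.
  move=> nPQ pw; have [h1 h2] := idx_bound pr pP e0 ecp pw.
  apply: (part1 pr qr pq pP qQ nPQ).
  by rewrite -(ltr_nat R); exact: lt_trans h2 h1.
move=> pw; have [h1 h2] := idx_bound pr pP e0 ecp pw.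
apply: part2.
have e2 : 0 <= 2 / eps by rewrite divr_ge0 // ltW.
by rewrite leqNgt truncn_lt_nat // -leNgt ltW.
Qed.
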